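(* Assume (A) and (D), and fix $t>0$. Let $G_t(r)=f^2(r)\exp(\widetilde Ktg(r))$, $w_t(r)=g^2(r)\exp(Ktg(r))$, $\widetilde w_t(r)=g^2(r)\exp(\widetilde Ktg(r))$. Let $\kappa,\widetilde\kappa>0$ and define $\alpha_t(u)=(f^2)^{-1}(\kappa/u)$ and $\beta_t(u)=G_t^{-1}(\widetilde\kappa/u)$ for $u$ large enough, where $G_t^{-1}$ is the inverse of $G_t$ restricted to a half-line on which $G_t$ is continuous and strictly decreasing (such a half-line exists). (a) For every $\varepsilon\in(0,1)$ there exists $r_\varepsilon>0$ with $f^2(r)\le G_t(r)\le f^{2-\varepsilon}(r)$ for $r>r_\varepsilon$; and for every $\delta>0$, $$\lim_{u\to\infty}\frac{w_t(\alpha_t(u))}{u^\delta}=\lim_{u\to\infty}\frac{\widetilde w_t(\beta_t(u))}{u^\delta}=0.$$ (b) If moreover $m=g$ satisfies, for some $\omega\ge0$, the condition: for every $c>0$ and $\lambda\ge1$, $\limsup_{s\to0^+}\frac{g(f^{-1}(cs^\lambda))}{g(f^{-1}(s))}\le\lambda^\omega$, then $$\lim_{u\to\infty}\frac{g(\beta_t(u))}{g(\alpha_t(u))}=1.$$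
   Context: Setting. Fix $d\ge1$. Let $A$ be a positive semidefinite $d\times d$ matrix and $\nu$ a symmetric Lévy measure on $\mathbb R^d\setminus\{0\}$ (positive Radon measure with $\int(1\wedge|z|^2)\,\nu(dz)<\infty$, $\nu(-B)=\nu(B)$) with $\nu(\mathbb R^d\setminus\{0\})=\infty$, absolutely continuous with density also denoted $\nu(x)$. The Lévy operator $L$ on $L^2(dx)$ is the Fourier multiplier $\widehat{Lh}(\xi)=-\Psi(\xi)\widehat h(\xi)$ with $\Psi(\xi)=\tfrac12A\xi\cdot\xi+\int(1-\cos(\xi\cdot z))\,\nu(dz)$; $\{P_t\}_{t\ge0}$ is the associated convolution semigroup, $P_th(x)=\int p_t(y-x)h(y)\,dy$ with densities $p_t$. Let $V$ be locally bounded on $\mathbb R^d$ with $V(x)\to\infty$ as $|x|\to\infty$, and let $H=-L+V$ (self-adjoint, bounded below, defined via quadratic forms on $L^2(dx)$). For $t>0$, $e^{-tH}$ has a continuous, positive, symmetric kernel $u_t(x,y)$. Let $\lambda_0=\inf\sigma(H)$ (a simple eigenvalue) and $\varphi_0$ the corresponding strictly positive, continuous, bounded eigenfunction with $\|\varphi_0\|_{L^2(dx)}=1$. Set $\mu(dx)=\varphi_0^2(x)\,dx$ (a probability measure), $q_t(x,y)=\dfrac{e^{\lambda_0t}u_t(x,y)}{\varphi_0(x)\varphi_0(y)}$ and $Q_th(x)=\int q_t(x,y)h(y)\,\mu(dy)$; $\{Q_t\}$ is a semigroup of contractions on every $L^p(\mu)$, $1\le p\le\infty$, and $q_t$ is symmetric.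 Assumption (A): there exist a strictly decreasing continuous $f:(0,\infty)\to(0,\infty)$, a strictly increasing continuous $g:[0,\infty)\to(0,\infty)$, constants $C_1,C_2\ge1$ and $R_0>0$ such that $C_1^{-1}f(|x|)\le\nu(x)\le C_1f(|x|)$ for $x\ne0$ and $C_2^{-1}g(|x|)\le V(x)\le C_2g(|x|)$ for $|x|\ge R_0$, and moreover: (A1) there is $C_3>0$ with $\int_{\{|x-y|>1,\,|y|>1\}}f(|x-y|)f(|y|)\,dy\le C_3f(|x|)$ for $|x|\ge1$; (A2) $(t,x)\mapsto p_t(x)$ is continuous on $(0,\infty)\times\mathbb R^d$ and for every $t_b>0$ there are $C_4,C_5>0$ with $p_t(x)\le C_4\big([e^{C_5t}f(|x|)]\wedge1\big)$ for $x\neq0$, $t\ge t_b$, and $\sup_{t\in(0,t_b]}\sup_{r\le|x|\le2}p_t(x)<\infty$ for every $r\in(0,1]$; (A3) there is $C_6\ge1$ with $g(r+1)\le C_6g(r)$ for $r\ge R_0$. Under (A), $f$ is a bijection of $(0,\infty)$ onto $(0,\infty)$ and $f^{-1}$, $(f^2)^{-1}$ denote the inverses. We write $f_1=f\wedge1$. Condition (D): the map $r\mapsto g(r)/|\log f(r)|$ is eventually decreasing and $\lim_{r\to\infty}g(r)/|\log f(r)|=0$. Heat kernel estimate (a known consequence of (A), used as standing input): for every $T>0$ there exist $\rho>1$, $C=C(T)>0$ and constants $K,\widetilde K>0$ independent of $T$ such that for all $x,y\in\mathbb R^d$ and $t\ge T$, $C^{-1}\max\{1,e^{\lambda_0t}\Gamma(\widetilde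 Kt,x,y)\}\le q_t(x,y)\le C\max\{1,e^{\lambda_0t}\Gamma(Kt,x,y)\}$, where $\Gamma(\tau,x,y)=\dfrac{\mathbf 1_{\{|x|,|y|>\rho\}}}{f_1(|x|)f_1(|y|)}\displaystyle\int_{\rho-1<|z|<|x|\vee|y|}f_1(|x-z|)f_1(|z-y|)e^{-\tau g(|z|)}\,dz$. Throughout, $K$ and $\widetilde K$ denote fixed constants for which this two-sided estimate holds. *)

(* Defs.v *)
From HB Require Import structures.
From mathcomp Require Import all_boot all_order all_algebra.
From mathcomp Require Import all_classical all_reals all_analysis.
Set Implicit Arguments. Unset Strict Implicit. Unset Printing Implicit Defensive.
Import Order.TTheory GRing.Theory Num.Theory.
Import numFieldNormedType.Exports.
Local Open Scope classical_set_scope.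
Local Open Scope ring_scope.

Section Defs.
Variable R : realType.

Definition Gt (f g : R -> R) (Kt t : R) (r : R) : R :=
  f r ^+ 2 * expR (Kt * t * g r).

(* w_t(r) = g^2(r) exp(K t g(r))  (also used with Kt for \widetilde w_t) *)
Definition wt (g : R -> R) (K t : R) (r : R) : R :=
  g r ^+ 2 * expR (K * t * g r).

Definition inv_pos (h : R -> R) (y : R) : R :=
  xget 0 [set x | 0 < x /\ h x = y].

Definition inv_ge (a : R) (h : R -> R) (y : R) : R :=
  xget a [set x | a <= x /\ h x = y].

Definition alpha_t (f : R -> R) (kappa u : R) : R :=
  inv_pos (fun r => f r ^+ 2) (kappa / u).

Definition beta_t (f g : R -> R) (Kt t a kappat u : R) : R :=
  inv_ge a (Gt f g Kt t) (kappat / u).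

Definition cont_strict_decr_from (h : R -> R) (a : R) : Prop :=
  {within [set x : R | a <= x], continuous h} /\
  (forall x y, a <= x -> x < y -> h y < h x).

End Defs.

(* Main.v *)
Require Import Defs.
From HB Require Import structures.
From mathcomp Require Import all_boot all_order all_algebra.
From mathcomp Require Import all_classical all_reals all_analysis.
From mathcomp Require Import lra ring.
Import Order.TTheory GRing.Theory Num.Theory.
Import numFieldNormedType.Exports.
Local Open Scope classical_set_scope.
Local Open Scope ring_scope.

Section S.
Variable R : realType.

Lemma pinfty_of (P : R -> Prop) M : (forall x, M < x -> P x) -> \forall x \near +oo, P x.
Proof. by move=> H; exists M; split => //; exact: num_real. Qed.

Lemma pinfty_ex (P : R -> Prop) : (\forall x \near +oo, P x) -> exists M, forall x, M < x -> P x.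
Proof. by move=> [M [_ H]]; exists M. Qed.

Lemma right0_ex {P : R -> Prop} : (\forall x \near 0^'+, P x) -> exists2 d, 0 < d & forall x, 0 < x < d -> P x.
Proof.
move=> /nbhs_ballP [d d0 H]; exists d => // x /andP[x0 xd]; apply: H => /=; last by [].
by rewrite /ball /= sub0r normrN gtr0_norm.
Qed.

Variables (f g : R -> R).
Lemma contg (g_cont : {within [set x : R | 0 <= x], continuous g}) x : 0 < x -> {for x, continuous g}.
Proof.
move=> x0.
have : {within [set x : R | 0 < x], continuous g}.
  by apply: continuous_subspaceW g_cont => y /= /ltW.
rewrite continuous_open_subspace; last exact: open_gt.
by apply; rewrite inE.
Qed.


Lemma div_lt {k y u : R} : 0 < k -> 0 < y -> k / y < u -> k / u < y.
Proof.
move=> k0 y0 H; have u0 : 0 < u by apply: lt_trans H; exact: divr_gt0.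
by move: H; rewrite !ltr_pdivrMr // mulrC.
Qed.

Variables (K Kt t kappa kappat : R).
Hypotheses (f_pos : forall r, 0 < r -> 0 < f r)
  (f_decr : forall r s, 0 < r -> r < s -> f s < f r)
  (f_cont : forall r, 0 < r -> {for r, continuous f})
  (f_onto : forall y, 0 < y -> exists r, 0 < r /\ f r = y)
  (g_pos : forall r, 0 <= r -> 0 < g r)
  (g_incr : forall r s, 0 <= r -> r < s -> g r < g s)
  (g_cont : {within [set x : R | 0 <= x], continuous g})
  (K_pos : 0 < K) (Kt_pos : 0 < Kt)
  (D_decr : exists r0, forall r s, r0 <= r -> r <= s ->
      g s / `|ln (f s)| <= g r / `|ln (f r)|)
  (D_lim : (fun r => g r / `|ln (f r)|) @ +oo --> (0 : R))
  (t_pos : 0 < t) (kappa_pos : 0 < kappa) (kappat_pos : 0 < kappat).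

Lemma f_small {y : R} : 0 < y -> exists M, 0 < M /\ forall r, M < r -> f r < y.
Proof.
move=> y0; have [r0 [r00 fr0]] := f_onto _ y0.
by exists r0; split => // r rr0; rewrite -fr0; apply: f_decr.
Qed.

Lemma h_small {eta : R} : 0 < eta -> exists M, 0 < M /\
  forall r, M < r -> [/\ 0 < r, 0 < f r, f r < 1 & g r <= eta * (- ln (f r))].
Proof.
move=> eta0.
have /cvgrPdist_le /(_ eta eta0) /pinfty_ex [M1 H1] := D_lim.
have [M2 [M20 H2]] := f_small ltr01.
exists (Num.max M1 M2); split; first by rewrite lt_max M20 orbT.
move=> r; rewrite gt_max => /andP[r1 r2].
have r0 : 0 < r by apply: lt_trans r2.
have fr := f_pos _ r0; have fr1 := H2 _ r2.
have ln0 : ln (f r) < 0 by apply: ln_lt0; rewrite fr fr1.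
split => //.
have gr := g_pos _ (ltW r0).
have := H1 _ r1; rewrite sub0r normrN (ltr0_norm ln0) ger0_norm; last first.
  by rewrite divr_ge0 // ?ltW // oppr_gt0.
by rewrite ler_pdivrMr // oppr_gt0.
Qed.

Lemma Gt_exp r : 0 < r -> Gt f g Kt t r = expR (2 * ln (f r) + Kt * t * g r).
Proof.
move=> r0; rewrite /Gt expRD; congr (_ * _).
by rewrite expRM_natl lnK // posrE f_pos.
Qed.

Lemma part1 : exists a, cont_strict_decr_from (Gt f g Kt t) a.
Proof.
have [r0 Hr0] := D_decr.
have c0 : 0 < Kt * t by rewrite mulr_gt0.
have ic0 : 0 < (Kt * t)^-1 by rewrite invr_gt0.
have [M [M0 HM]] := h_small ic0.
have m1 : M <= Num.max M r0 by rewrite le_max lexx.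
have m2 : r0 <= Num.max M r0 by rewrite le_max lexx orbT.
exists (Num.max M r0 + 1); split.
- apply: continuous_in_subspaceT => x; rewrite inE /= => ax.
  have x0 : 0 < x by lra.
  change ({for x, continuous ((fun r => f r ^+ 2) \* (fun r => expR (Kt * t * g r)))}).
  apply: continuousM.
    have -> : (fun r => f r ^+ 2) = f \* f by apply: funext => r; rewrite expr2.
    by apply: continuousM; exact: f_cont.
  apply: (@continuous_comp _ _ _ (fun r => Kt * t * g r) expR); last exact: continuous_expR.
  by apply: continuousM; [exact: cvg_cst | exact: contg].
- move=> x y ax xy.
  have x0 : 0 < x by lra.
  have y0 : 0 < y by lra.
  have [_ fx fx1 gx] := HM x ltac:(lra).
  have [_ fy fy1 gy] := HM y ltac:(lra).
  rewrite !Gt_exp // ltr_expR.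
  have Lxy : ln (f y) < ln (f x) by rewrite ltr_ln ?posrE //; exact: f_decr.
  have lnx0 : ln (f x) < 0 by apply: ln_lt0; rewrite fx fx1.
  have lny0 : ln (f y) < 0 by apply: ln_lt0; rewrite fy fy1.
  have D := Hr0 x y ltac:(lra) (ltW xy).
  rewrite (ltr0_norm lnx0) (ltr0_norm lny0) in D.
  set hx := g x / - ln (f x) in D.
  have gxe : g x = hx * (- ln (f x)) by rewrite /hx divfK // oppr_eq0 lt_eqF.
  have gye : g y <= hx * (- ln (f y)) by rewrite -ler_pdivrMr // oppr_gt0.
  have hxi : hx <= (Kt * t)^-1.
    by rewrite /hx ler_pdivrMr // oppr_gt0.
  have e1 : Kt * t * (Kt * t)^-1 = 1 by rewrite mulfV // lt0r_neq0.
  have k1 : Kt * t * hx <= 1 by nra.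
  have cgy : Kt * t * g y <= Kt * t * hx * (- ln (f y)) by nra.
  have cgx : Kt * t * g x = Kt * t * hx * (- ln (f x)) by rewrite gxe mulrA.
  nra.
Qed.


Lemma part2 eps : 0 < eps < 1 -> exists reps, 0 < reps /\
     forall r, reps < r ->
       f r ^+ 2 <= Gt f g Kt t r /\ Gt f g Kt t r <= f r `^ (2 - eps).
Proof.
move=> /andP[e0 e1].
have c0 : 0 < Kt * t by rewrite mulr_gt0.
have ec0 : 0 < eps / (Kt * t) by rewrite divr_gt0.
have [M [M0 HM]] := h_small ec0.
exists M; split => // r rM.
have [r0 fr fr1 gr] := HM r rM.
have g0 := g_pos _ (ltW r0).
split.
  rewrite /Gt ler_peMr ?sqr_ge0 //.
  by rewrite -expR0 ler_expR mulr_ge0 // ?ltW.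
rewrite Gt_exp // /powR gt_eqF // ler_expR.
have cg : Kt * t * g r <= eps * - ln (f r).
  by rewrite mulrC -ler_pdivlMr // mulrAC.
nra.
Qed.

Lemma lim_gen (k c' A delta : R) (rho : R -> R) : 0 <= k -> 0 <= c' -> 0 < delta ->
 (forall M, \forall u \near +oo, M < rho u) ->
 (\forall u \near +oo, 0 < u /\ ln u = A - (2 * ln (f (rho u)) + c' * g (rho u))) ->
 (fun u => g (rho u) ^+ 2 * expR (k * g (rho u)) / u `^ delta) @ +oo --> (0 : R).
Proof.
move=> k0 c'0 d0 Hrho Heq.
set D := 2 + k + delta * c' / 2.
have dc0 : 0 <= delta * c' / 2 by rewrite divr_ge0 ?mulr_ge0 // ltW.
have D0 : 0 < D by rewrite /D; lra.
have eta0 : 0 < delta / D by rewrite divr_gt0.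
have [M [M0 HM]] := h_small eta0.
apply/cvgrPdist_le => e e0.
set B := - A - 2 / delta * ln e.
have H3 : \forall u \near +oo, expR B < u := nbhs_pinfty_gt (num_real _).
near=> u.
have [u0 lnu] : 0 < u /\ ln u = A - (2 * ln (f (rho u)) + c' * g (rho u)) by near: u.
have Mr : M < rho u by near: u; exact: Hrho.
have uB : expR B < u by near: u.
have [r0 fr fr1 gr] := HM _ Mr.
set G := g (rho u) in gr lnu *.
set L := - ln (f (rho u)) in gr lnu.
have G0 : 0 < G := g_pos _ (ltW r0).
have lnuB : B < ln u by rewrite -[B]expRK ltr_ln ?posrE ?expR_gt0.
rewrite sub0r normrN ger0_norm; last first.
  by rewrite divr_ge0 ?powR_ge0 // mulr_ge0 ?sqr_ge0 ?expR_ge0.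
rewrite /powR gt_eqF //.
have GE : G <= expR G by have := expR_ge1Dx G; lra.
have G2 : G ^+ 2 <= expR (2 * G) by rewrite expRM_natl; nra.
apply: (@le_trans _ _ (expR (2 * G) * expR (k * G) / expR (delta * ln u))).
  by rewrite ler_wpM2r ?invr_ge0 ?expR_ge0 // ler_wpM2r ?expR_ge0.
rewrite -expRD -expRN -expRD -[e]lnK ?posrE // ler_expR.
have DG : D * G <= delta * L.
  have := gr; rewrite -(ler_pM2l D0).
  have -> : D * (delta / D * L) = delta * L by field; rewrite gt_eqF.
  by [].
have e1 : delta * ln u = delta * A + 2 * (delta * L) - delta * c' * G.
  by rewrite lnu /L; ring.
have e2 : delta * B < delta * ln u by rewrite ltr_pM2l.
have e3 : delta * B = - (delta * A) - 2 * ln e by rewrite /B; field; rewrite gt_eqF.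
rewrite /D in DG.
have e4 : delta * c' / 2 * G = (delta * c' * G) / 2 by field.
nra.
Unshelve. all: by end_near.
Qed.


Lemma inv_pos_spec {y : R} : 0 < y -> 0 < inv_pos f y /\ f (inv_pos f y) = y.
Proof.
move=> y0; have [r [r0 fr]] := f_onto _ y0.
by apply: (@xgetPex _ 0 [set x | 0 < x /\ f x = y]); exists r.
Qed.

Lemma inv_pos_K r : 0 < r -> inv_pos f (f r) = r.
Proof.
move=> r0; have [p0 fp] := inv_pos_spec (f_pos _ r0).
set p := inv_pos f (f r) in p0 fp *.
case: (ltgtP p r) => // H.
- by have := f_decr _ _ p0 H; rewrite fp ltxx.
- by have := f_decr _ _ r0 H; rewrite fp ltxx.
Qed.

Lemma inv_pos_le1 {r y : R} : 0 < r -> 0 < y -> f r <= y -> inv_pos f y <= r.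
Proof.
move=> r0 y0 fry; have [p0 fp] := inv_pos_spec y0.
rewrite leNgt; apply/negP => H.
by have := f_decr _ _ r0 H; rewrite fp; apply/negP; rewrite -leNgt.
Qed.

Lemma inv_pos_le2 {r y : R} : 0 < r -> 0 < y -> y <= f r -> r <= inv_pos f y.
Proof.
move=> r0 y0 fry; have [p0 fp] := inv_pos_spec y0.
rewrite leNgt; apply/negP => H.
by have := f_decr _ _ p0 H; rewrite fp; apply/negP; rewrite -leNgt.
Qed.

Lemma g_le {r s : R} : 0 <= r -> r <= s -> g r <= g s.
Proof.
move=> r0; rewrite le_eqVlt => /orP[/eqP -> //|H]; exact/ltW/g_incr.
Qed.

Lemma alpha_spec {u : R} : 0 < u -> 0 < alpha_t f kappa u /\ f (alpha_t f kappa u) ^+ 2 = kappa / u.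
Proof.
move=> u0.
have ku : 0 < kappa / u by rewrite divr_gt0.
have [p0 fp] := inv_pos_spec (y := Num.sqrt (kappa / u)) ltac:(by rewrite sqrtr_gt0).
have [r [r0 fr]] := f_onto _ ku.
apply: (@xgetPex _ 0 [set x | 0 < x /\ f x ^+ 2 = kappa / u]).
by exists (inv_pos f (Num.sqrt (kappa / u))); split => //; rewrite fp sqr_sqrtr // ltW.
Qed.

Lemma alpha_inf M : \forall u \near +oo, M < alpha_t f kappa u.
Proof.
set M' := Num.max M 1.
have M'0 : 0 < M' by rewrite lt_max ltr01 orbT.
have MM : M <= M' by rewrite le_max lexx.
have y0 := f_pos _ M'0.
have y20 : 0 < f M' ^+ 2 by rewrite exprn_gt0.
near=> u.
have uk : kappa / f M' ^+ 2 < u by near: u; exact: nbhs_pinfty_gt (num_real _).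
have u0 : 0 < u by apply: lt_trans uk; rewrite divr_gt0.
have [a0 fa] := alpha_spec u0.
have := div_lt kappa_pos y20 uk; rewrite -fa => H.
apply: (le_lt_trans MM); rewrite ltNge; apply/negP => aM.
have : f M' <= f (alpha_t f kappa u).
  move: aM; rewrite le_eqVlt => /orP[/eqP -> //|aM]; exact/ltW/f_decr.
have := f_pos _ a0; nra.
Unshelve. all: by end_near.
Qed.

Lemma part3 delta : 0 < delta ->
  (fun u => wt g K t (alpha_t f kappa u) / u `^ delta) @ +oo --> (0 : R).
Proof.
move=> d0.
apply: (@lim_gen (K * t) 0 (ln kappa)) => //; first by rewrite ltW // mulr_gt0.
  exact: alpha_inf.
near=> u.
have u0 : 0 < u by near: u; exact: nbhs_pinfty_gt (num_real _).
split => //.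
have [a0 fa] := alpha_spec u0.
have := congr1 (@ln R) fa; rewrite lnXn ?f_pos // ln_div ?posrE // mulr2n mul0r addr0.
lra.
Unshelve. all: by end_near.
Qed.


Lemma Gt_le_f : exists M1, forall r, M1 < r -> 0 < r /\ Gt f g Kt t r <= f r.
Proof.
have c0 : 0 < Kt * t by rewrite mulr_gt0.
have ic0 : 0 < (Kt * t)^-1 by rewrite invr_gt0.
have [M [M0 HM]] := h_small ic0.
exists M => r rM; have [r0 fr fr1 gr] := HM r rM; split => //.
rewrite Gt_exp // -[X in _ <= X]lnK ?posrE // ler_expR.
have e1 : Kt * t * (Kt * t)^-1 = 1 by rewrite mulfV // lt0r_neq0.
have lnf0 : ln (f r) < 0 by apply: ln_lt0; rewrite fr fr1.
nra.
Qed.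

Section beta.
Variable a : R.
Hypothesis Ha : cont_strict_decr_from (Gt f g Kt t) a.

Lemma Gt_a_pos : 0 < Gt f g Kt t a.
Proof.
have [_ Gd] := Ha.
set x1 := Num.max a 0 + 1.
have m1 : a <= Num.max a 0 by rewrite le_max lexx.
have m2 : 0 <= Num.max a 0 by rewrite le_max lexx orbT.
have x10 : 0 < x1 by rewrite /x1; lra.
apply: (lt_trans _ (Gd a x1 (lexx a) ltac:(rewrite /x1; lra))).
by rewrite Gt_exp // expR_gt0.
Qed.

Lemma beta_spec : \forall u \near +oo,
  a <= beta_t f g Kt t a kappat u /\ Gt f g Kt t (beta_t f g Kt t a kappat u) = kappat / u.
Proof.
have [Gc Gd] := Ha.
have Ga := Gt_a_pos.
have [M1 HM1] := Gt_le_f.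
near=> u.
have ua : kappat / Gt f g Kt t a < u by near: u; exact: nbhs_pinfty_gt (num_real _).
have u0 : 0 < u by apply: lt_trans ua; rewrite divr_gt0.
set y := kappat / u.
have y0 : 0 < y by rewrite divr_gt0.
have yGa : y < Gt f g Kt t a := div_lt kappat_pos Ga ua.
have [M3 [M30 HM3]] := f_small y0.
set b := Num.max (Num.max M1 M3) a + 1.
have m1 : Num.max M1 M3 <= Num.max (Num.max M1 M3) a by rewrite le_max lexx.
have m2 : a <= Num.max (Num.max M1 M3) a by rewrite le_max lexx orbT.
have m3 : M1 <= Num.max M1 M3 by rewrite le_max lexx.
have m4 : M3 <= Num.max M1 M3 by rewrite le_max lexx orbT.
have ab : a < b by rewrite /b; lra.
have [_ Gb] := HM1 b ltac:(rewrite /b; lra).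
have fb := HM3 b ltac:(rewrite /b; lra).
have Gab := Gd a b (lexx a) ab.
have Gc' : {within `[a, b], continuous (Gt f g Kt t)}.
  apply: (continuous_subspaceW (B := [set x | a <= x])) Gc.
  by move=> x; rewrite /= in_itv /= => /andP[].
have Hv : Num.min (Gt f g Kt t a) (Gt f g Kt t b) <= y <= Num.max (Gt f g Kt t a) (Gt f g Kt t b).
  apply/andP; split.
    by rewrite ge_min; apply/orP; right; lra.
  by rewrite le_max; apply/orP; left; lra.
have [c cab Gcy] := @IVT R (Gt f g Kt t) a b y (ltW ab) Gc' Hv.
apply: (@xgetPex _ a [set x | a <= x /\ Gt f g Kt t x = y]).
by exists c; split => //; move: cab; rewrite in_itv /= => /andP[].
Unshelve. all: by end_near.
Qed.

Lemma beta_inf M : \forall u \near +oo, M < beta_t f g Kt t a kappat u.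
Proof.
have [Gc Gd] := Ha.
set M' := Num.max (Num.max M a) 1.
have m1 : Num.max M a <= M' by rewrite le_max lexx.
have m2 : 1 <= M' by rewrite le_max lexx orbT.
have m3 : M <= Num.max M a by rewrite le_max lexx.
have m4 : a <= Num.max M a by rewrite le_max lexx orbT.
have M'0 : 0 < M' by lra.
have G1 : 0 < Gt f g Kt t M' by rewrite Gt_exp // expR_gt0.
have Hb := beta_spec.
near=> u.
have uk : kappat / Gt f g Kt t M' < u by near: u; exact: nbhs_pinfty_gt (num_real _).
have [ab Gb] : a <= beta_t f g Kt t a kappat u /\
   Gt f g Kt t (beta_t f g Kt t a kappat u) = kappat / u by near: u.
have := div_lt kappat_pos G1 uk; rewrite -Gb => H.
set bb := beta_t f g Kt t a kappat u in ab Gb H *.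
case: (ltP M' bb) => [|Hle]; first by lra.
exfalso; move: Hle; rewrite le_eqVlt => /orP[/eqP E|lt].
  by move: H; rewrite E ltxx.
by have := Gd _ _ ab lt; lra.
Unshelve. all: by end_near.
Qed.

Lemma part4 delta : 0 < delta ->
  (fun u => wt g Kt t (beta_t f g Kt t a kappat u) / u `^ delta) @ +oo --> (0 : R).
Proof.
move=> d0.
have c0 : 0 < Kt * t by rewrite mulr_gt0.
apply: (@lim_gen (Kt * t) (Kt * t) (ln kappat)) => //; try exact: ltW.
  exact: beta_inf.
have Hb := beta_spec.
have Hi := beta_inf 0.
near=> u.
have u0 : 0 < u by near: u; exact: nbhs_pinfty_gt (num_real _).
have [ab Gb] : a <= beta_t f g Kt t a kappat u /\
   Gt f g Kt t (beta_t f g Kt t a kappat u) = kappat / u by near: u.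
have b0 : 0 < beta_t f g Kt t a kappat u by near: u.
split => //.
have := congr1 (@ln R) Gb; rewrite Gt_exp // expRK ln_div ?posrE //.
lra.
Unshelve. all: by end_near.
Qed.




Lemma expR_small {q e : R} : 0 < q -> q <= 1/2 -> 4 * q <= e -> expR q <= 1 + e / 2.
Proof.
move=> q0 q1 qe.
have E1 := expR_ge1Dx (- q).
have E2 : expR q * expR (- q) = 1 by rewrite -expRD subrr expR0.
have E0 := expR_gt0 q.
have E3 := expR_gt0 (- q).
nra.
Qed.

Lemma partb : (exists omega, 0 <= omega /\
      forall c lam, 0 < c -> 1 <= lam ->
        forall e, 0 < e -> \forall s \near 0^'+,
          g (inv_pos f (c * s `^ lam)) / g (inv_pos f s) <= lam `^ omega + e) ->
  (fun u => g (beta_t f g Kt t a kappat u) / g (alpha_t f kappa u)) @ +oo --> (1 : R).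
Proof.
move=> [w [w0 Hw]].
have c0 : 0 < Kt * t by rewrite mulr_gt0.
apply/cvgrPdist_le => e e0.
set q := e / (8 + 2 * e).
have q0 : 0 < q by rewrite divr_gt0 //; lra.
have qe : q * (8 + 2 * e) = e by rewrite /q divfK // gt_eqF //; lra.
have q1 : q <= 1/2 by nra.
have q4 : 4 * q <= e by nra.
set eta := q / (w + 1).
have eta0 : 0 < eta by rewrite divr_gt0 //; lra.
have etae : eta * (w + 1) = q by rewrite /eta divfK // gt_eqF //; lra.
have etaq : eta <= q by nra.
have P0 : 0 < 2 - eta by lra.
set lam := 2 / (2 - eta).
have lame : lam * (2 - eta) = 2 by rewrite /lam divfK // gt_eqF.
have lam1 : 1 <= lam by nra.
have lam0 : 0 < lam by lra.
have lamw : lam `^ w <= 1 + e / 2.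
  apply: (le_trans _ (expR_small q0 q1 q4)).
  rewrite /powR gt_eqF // ler_expR.
  have := le_ln1Dx (x := lam - 1) ltac:(lra); rewrite addrC subrK => Hl.
  have : lam - 1 <= eta by nra.
  nra.
set C1 := (ln kappat - ln kappa) / (2 - eta).
have C1e : C1 * (2 - eta) = ln kappat - ln kappa by rewrite /C1 divfK // gt_eqF.
have [d1 d10 Hd1] := right0_ex (Hw (expR C1) lam (expR_gt0 _) lam1 (e / 2) ltac:(lra)).
set c2 := Num.sqrt (kappat / kappa).
have c20 : 0 < c2 by rewrite sqrtr_gt0 divr_gt0.
have c2e : c2 ^+ 2 = kappat / kappa by rewrite sqr_sqrtr // ltW // divr_gt0.
have [d2 d20 Hd2] := right0_ex (Hw (c2^-1) 1 ltac:(by rewrite invr_gt0) (lexx 1) e e0).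
have etac : 0 < eta / (Kt * t) by rewrite divr_gt0.
have [M [M0 HM]] := h_small etac.
have Hb := beta_spec.
have Hi := beta_inf M.
have d1p : 0 < d1 ^+ 2 by rewrite exprn_gt0.
have d2p : 0 < d2 ^+ 2 by rewrite exprn_gt0.
near=> u.
have u0 : 0 < u by near: u; exact: nbhs_pinfty_gt (num_real _).
have ud1 : kappa / d1 ^+ 2 < u by near: u; exact: nbhs_pinfty_gt (num_real _).
have ud2 : kappat / d2 ^+ 2 < u by near: u; exact: nbhs_pinfty_gt (num_real _).
have [ab Gb] : a <= beta_t f g Kt t a kappat u /\
   Gt f g Kt t (beta_t f g Kt t a kappat u) = kappat / u by near: u.
have bM : M < beta_t f g Kt t a kappat u by near: u.
set bb := beta_t f g Kt t a kappat u in ab Gb bM *.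
have [al0 fal] := alpha_spec u0.
set al := alpha_t f kappa u in al0 fal *.
set s := f al in fal *.
have s0 : 0 < s := f_pos _ al0.
have [b0 fb fb1 gb] := HM _ bM.
have gb0 : 0 < g bb := g_pos _ (ltW b0).
have ga0 : 0 < g al := g_pos _ (ltW al0).
have s1 : s < d1.
  have := div_lt kappa_pos d1p ud1; rewrite -fal => H; nra.
have H1 := Hd1 s ltac:(by rewrite s0 s1).
rewrite /s inv_pos_K // in H1.
have lnG : 2 * ln (f bb) + Kt * t * g bb = ln kappat - ln u.
  by have := congr1 (@ln R) Gb; rewrite Gt_exp // expRK ln_div ?posrE.
have lns : 2 * ln s = ln kappa - ln u.
  by have := congr1 (@ln R) fal; rewrite lnXn // ln_div ?posrE // mulr2n; lra.
have cgb : Kt * t * g bb <= eta * - ln (f bb).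
  by rewrite mulrC -ler_pdivlMr // mulrAC.
have y1 : expR C1 * s `^ lam <= f bb.
  rewrite /powR gt_eqF // -expRD -[X in _ <= X]lnK ?posrE // ler_expR.
  rewrite -(ler_pM2l P0) mulrDr.
  have -> : (2 - eta) * C1 = ln kappat - ln kappa by rewrite mulrC.
  have -> : (2 - eta) * (lam * ln s) = 2 * ln s by rewrite mulrA (mulrC (2 - eta)) lame.
  rewrite mulrBl.
  lra.
have y1p : 0 < expR C1 * s `^ lam by rewrite mulr_gt0 ?expR_gt0 ?powR_gt0.
have ble := inv_pos_le2 b0 y1p y1.
have [rho1p _] := inv_pos_spec y1p.
have gble := g_le (ltW b0) ble.
have up : g bb <= (1 + e) * g al.
  move: H1; rewrite ler_pdivrMr // => H1; nra.
have fbb2 : f bb ^+ 2 <= kappat / u.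
  rewrite -Gb /Gt ler_peMr ?sqr_ge0 //.
  by rewrite -expR0 ler_expR mulr_ge0 // ?ltW // g_pos // ltW.
have c2s : (c2 * s) ^+ 2 = kappat / u.
  by rewrite exprMn c2e fal; field; rewrite !gt_eqF.
have s2p : 0 < c2 * s by rewrite mulr_gt0.
have fbs : f bb <= c2 * s by rewrite -c2s in fbb2; nra.
have s2d : c2 * s < d2.
  by have := div_lt kappat_pos d2p ud2; rewrite -c2s => H; nra.
have H2 := Hd2 (c2 * s) ltac:(by rewrite s2p s2d).
rewrite (powRr1 (ltW s2p)) mulrA (mulVf (lt0r_neq0 c20)) mul1r powR1 /s inv_pos_K // in H2.
have rle := inv_pos_le1 b0 s2p fbs.
have [rho2p _] := inv_pos_spec s2p.
have grle := g_le (ltW rho2p) rle.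
have gr2 : 0 < g (inv_pos f (c2 * s)) := g_pos _ (ltW rho2p).
have lo : g al <= (1 + e) * g bb.
  move: H2; rewrite /= ler_pdivrMr // => H2.
  apply: (le_trans H2); apply: ler_wpM2l => //; lra.
have lo' : (1 - e) * g al <= g bb.
  case: (lerP e 1) => he.
    have := ler_wpM2l (x := 1 - e) ltac:(lra) lo.
    have : 0 <= e * e * g bb by rewrite mulr_ge0 ?mulr_ge0 // ltW.
    move=> h1 h2; apply: (le_trans h2).
    have -> : (1 - e) * ((1 + e) * g bb) = g bb - e * e * g bb by ring.
    lra.
  have : (1 - e) * g al < 0 by rewrite nmulr_rlt0 //; lra.
  lra.
rewrite ler_norml; apply/andP; split.
  have : g bb / g al <= 1 + e by rewrite ler_pdivrMr.
  lra.
have : 1 - e <= g bb / g al by rewrite ler_pdivlMr.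
lra.
Unshelve. all: by end_near.
Qed.

End beta.

End S.

Theorem lemma4p2 (R : realType) (f g : R -> R) (K Kt C6 R0 t kappa kappat : R)
  (* parts of assumption (A) concerning f and g *)
  (f_pos : forall r, 0 < r -> 0 < f r)
  (f_decr : forall r s, 0 < r -> r < s -> f s < f r)
  (f_cont : forall r, 0 < r -> {for r, continuous f})
  (f_onto : forall y, 0 < y -> exists r, 0 < r /\ f r = y)
  (g_pos : forall r, 0 <= r -> 0 < g r)
  (g_incr : forall r s, 0 <= r -> r < s -> g r < g s)
  (g_cont : {within [set x : R | 0 <= x], continuous g})
  (R0_pos : 0 < R0) (C6_ge1 : 1 <= C6)
  (A3 : forall r, R0 <= r -> g (r + 1) <= C6 * g r)
  (* constants of the heat kernel estimate *)
  (K_pos : 0 < K) (Kt_pos : 0 < Kt)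
  (* condition (D) *)
  (D_decr : exists r0, forall r s, r0 <= r -> r <= s ->
      g s / `|ln (f s)| <= g r / `|ln (f r)|)
  (D_lim : (fun r => g r / `|ln (f r)|) @ +oo --> (0 : R))
  (t_pos : 0 < t) (kappa_pos : 0 < kappa) (kappat_pos : 0 < kappat) :
  (* a half-line where G_t is continuous and strictly decreasing exists *)
  (exists a, cont_strict_decr_from (Gt f g Kt t) a)
  /\
  (* (a), first part *)
  (forall eps, 0 < eps < 1 -> exists reps, 0 < reps /\
     forall r, reps < r ->
       f r ^+ 2 <= Gt f g Kt t r /\ Gt f g Kt t r <= f r `^ (2 - eps))
  /\
  (* (a), limit for alpha_t *)
  (forall delta, 0 < delta ->
     (fun u => wt g K t (alpha_t f kappa u) / u `^ delta) @ +oo --> (0 : R))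
  /\
  (* (a), limit for beta_t, for any admissible half-line [a, +oo) *)
  (forall a, cont_strict_decr_from (Gt f g Kt t) a ->
     forall delta, 0 < delta ->
     (fun u => wt g Kt t (beta_t f g Kt t a kappat u) / u `^ delta) @ +oo
       --> (0 : R))
  /\
  (* (b) *)
  ((exists omega, 0 <= omega /\
      forall c lam, 0 < c -> 1 <= lam ->
        forall e, 0 < e -> \forall s \near 0^'+,
          g (inv_pos f (c * s `^ lam)) / g (inv_pos f s) <= lam `^ omega + e) ->
   forall a, cont_strict_decr_from (Gt f g Kt t) a ->
     (fun u => g (beta_t f g Kt t a kappat u) / g (alpha_t f kappa u)) @ +oo
       --> (1 : R)).
Proof.
split; first by apply: part1.
split; first by move=> eps; apply: part2.
split; first by move=> delta; apply: part3.
split; first by move=> a Ha delta; apply: part4.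
by move=> Hw a Ha; apply: partb.
Qed.
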